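(* Let $f:\mathbb{R}^d\to\mathbb{R}$ be twice differentiable and strictly pseudoconvex, with (unique) global minimizer $x_*$. Define \[ g(x)\coloneqq f(x_* )+\int_0^1\frac{\langle\nabla f(x_*+t(x-x_* )),\,x-x_*\rangle}{t}\,dt . \] Then $g$ is well defined and star-convex, i.e. for all $x\in\mathbb{R}^d$ and $\lambda\in[0,1]$, \[ g\bigl(x_*+\lambda(x-x_* )\bigr)\le(1-\lambda)\,g(x_* )+\lambda\,g(x). \]
   Context: $f$ is strictly pseudoconvex if for all $x\neq y$, $f(y)\le f(x)\Rightarrow\langle\nabla f(x),y-x\rangle<0$. *)

(* Defs.v *)
(* R^d is 'rV[R]_d. *)
From HB Require Import structures.
From mathcomp Require Import all_boot all_order all_algebra.
From mathcomp Require Import all_classical all_reals all_analysis.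
Set Implicit Arguments. Unset Strict Implicit. Unset Printing Implicit Defensive.
Import Order.TTheory GRing.Theory Num.Theory.
Import numFieldNormedType.Exports.
Local Open Scope classical_set_scope.
Local Open Scope ring_scope.

Definition dotp {R : realType} {d : nat} (u v : 'rV[R]_d) : R :=
  \sum_(i < d) u 0 i * v 0 i.

Definition grad {R : realType} {d : nat} (f : 'rV[R]_d -> R) (x : 'rV[R]_d)
  : 'rV[R]_d := \row_(i < d) ('D_(delta_mx 0 i) f x).

Definition twice_differentiable {R : realType} {d : nat}
  (f : 'rV[R]_d -> R) : Prop :=
  (forall x, differentiable f x) /\ (forall x, differentiable (grad f) x).

Definition strictly_pseudoconvex {R : realType} {d : nat}
  (f : 'rV[R]_d -> R) : Prop :=
  forall x y, x != y -> f y <= f x -> dotp (grad f x) (y - x) < 0.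

Definition is_global_minimizer {R : realType} {d : nat}
  (f : 'rV[R]_d -> R) (xs : 'rV[R]_d) : Prop :=
  forall x, f xs <= f x.

Definition g_integrand {R : realType} {d : nat} (f : 'rV[R]_d -> R)
  (xs x : 'rV[R]_d) (t : R) : R :=
  dotp (grad f (xs + t *: (x - xs))) (x - xs) / t.

Definition gfun {R : realType} {d : nat} (f : 'rV[R]_d -> R)
  (xs x : 'rV[R]_d) : R :=
  f xs + Rintegral lebesgue_measure `[0%R, 1%R] (g_integrand f xs x).

(* Main.v *)
Require Import Defs.
From HB Require Import structures.
From mathcomp Require Import all_boot all_order all_algebra.
From mathcomp Require Import all_classical all_reals all_analysis.
From mathcomp Require Import ring lra measurable_realfun.
Import Order.TTheory GRing.Theory Num.Theory.
Import numFieldNormedType.Exports.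
Local Open Scope classical_set_scope.
Local Open Scope ring_scope.
Section S.
Variables (R : realType) (d : nat).
Implicit Types u v w : 'rV[R]_d.

Lemma dotpZr u v (a : R) : dotp u (a *: v) = a * dotp u v.
Proof. rewrite /dotp mulr_sumr; apply: eq_bigr => i _; rewrite mxE; ring. Qed.
Lemma dotpZl u v (a : R) : dotp (a *: u) v = a * dotp u v.
Proof. rewrite /dotp mulr_sumr; apply: eq_bigr => i _; rewrite mxE; ring. Qed.
Lemma dotpBl u w v : dotp (u - w) v = dotp u v - dotp w v.
Proof. rewrite /dotp -sumrB; apply: eq_bigr => i _; rewrite !mxE; ring. Qed.
Lemma dotp0r u : dotp u 0 = 0.
Proof. rewrite /dotp big1 // => i _; by rewrite mxE mulr0. Qed.
Lemma dotp0l v : dotp 0 v = 0.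
Proof. rewrite /dotp big1 // => i _; by rewrite mxE mul0r. Qed.

Lemma dotp_cont v : continuous (fun u => dotp u v).
Proof.
rewrite /dotp.
apply: continuous_big => [|i _]; first exact: add_continuous.
move=> u; apply: (@continuousM _ _ (fun M : 'rV[R]_d => M 0 i) (fun=> v 0 i)); [exact: coord_continuous|exact: cst_continuous].
Qed.

Lemma deriv_min (f : 'rV[R]_d -> R) (xs e : 'rV[R]_d) :
  derivable f xs e -> (forall x, f xs <= f x) -> 'D_e f xs = 0.
Proof.
move=> dv mn.
set q := fun h : R => h^-1 *: ((f \o shift xs) (h *: e) - f xs).
have cl : q @ 0^'- --> 'D_e f xs.
  apply: cvg_trans dv; apply: cvg_app.
  move=> A [r r0 Ar]; exists r => // x xe xgt0; apply: Ar => //.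
  exact/ltr0_neq0.
have cr : q @ 0^'+ --> 'D_e f xs.
  apply: cvg_trans dv; apply: cvg_app.
  move=> A [r r0 Ar]; exists r => // x xe xgt0; apply: Ar => //.
  exact/lt0r_neq0.
apply/eqP; rewrite eq_le; apply/andP; split.
- rewrite -(cvg_lim _ cl) //; apply: limr_le; first by apply/cvg_ex; exists ('D_e f xs).
  near=> h; have h0 : h < 0 by near: h; exact: nbhs_left_lt.
  rewrite /q /=; apply: mulr_le0_ge0; [by rewrite invr_le0 ltW|by rewrite subr_ge0 mn].
- rewrite -(cvg_lim _ cr) //; apply: limr_ge; first by apply/cvg_ex; exists ('D_e f xs).
  near=> h; have h0 : 0 < h by near: h; exact: nbhs_right_gt.
  rewrite /q /=; apply: mulr_ge0; [by rewrite invr_ge0 ltW|by rewrite subr_ge0 mn].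
Unshelve. all: by end_near.
Qed.
End S.

Section Main.
Variables (R : realType) (d : nat) (f : 'rV[R]_d -> R) (xs : 'rV[R]_d).
Hypothesis fd : forall x, differentiable f x.
Hypothesis gd : forall x, differentiable (grad f) x.
Hypothesis pc : strictly_pseudoconvex f.
Hypothesis mn : is_global_minimizer f xs.

Definition psi (v : 'rV[R]_d) (s : R) := dotp (grad f (xs + s *: v)) v.

Lemma grad_xs : grad f xs = 0.
Proof.
apply/rowP => i; rewrite !mxE; apply: deriv_min => //.
exact: diff_derivable.
Qed.

Lemma psi0 v : psi v 0 = 0.
Proof. by rewrite /psi scale0r addr0 grad_xs dotp0l. Qed.

Lemma psi_cont v : continuous (psi v).
Proof.
move=> s; rewrite /psi.
have h1 : {for s, continuous (fun s : R => xs + s *: v)}.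
  apply: cvgD; first exact: cvg_cst.
  apply: cvgZr_tmp. exact: cvg_id.
have h2 := continuous_comp h1 (differentiable_continuous (gd (xs + s *: v))).
exact: (continuous_comp h2 (@dotp_cont R d v _)).
Qed.

Definition Lv v := dotp ('D_v (grad f) xs) v.

Lemma psi_lim v : (fun s => psi v s / s) @ 0^' --> Lv v.
Proof.
have dv : derivable (grad f) xs v by exact: diff_derivable.
have := cvg_comp _ _ dv (@dotp_cont R d v ('D_v (grad f) xs)).
apply: cvg_trans; apply: near_eq_cvg; near=> s.
rewrite /= dotpZl grad_xs subr0 /psi mulrC addrC //.
Unshelve. all: by end_near.
Qed.


Definition ht v (s : R) := if s == 0 then Lv v else psi v s / s.

Lemma ht_cont v : continuous (ht v).
Proof.
move=> s; have [->|s0] := eqVneq s 0.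
  apply/continuous_withinNx; rewrite /ht eqxx.
  apply: cvg_trans (psi_lim v); apply: near_eq_cvg; near=> t.
  have t0 : t != 0 by near: t; exact: nbhs_dnbhs_neq.
  by rewrite (negbTE t0).
have nz : \forall t \near s, t != 0.
  have [sp|sn|sn] := ltgtP s 0.
  - have : s \in `]-oo, 0[ by rewrite in_itv.
    move=> /near_in_itvNyo; apply: filterS => t; rewrite in_itv /=; exact: ltr0_neq0.
  - have : s \in `]0, +oo[ by rewrite in_itv /= sn.
    move=> /near_in_itvoy; apply: filterS => t; rewrite in_itv /= andbT; exact: lt0r_neq0.
  - by move: s0; rewrite sn eqxx.
have c : {for s, continuous (fun t => psi v t / t)}.
  apply: continuousM; first exact: psi_cont.
  exact: continuousV.
rewrite /continuous_at {2}/ht (negbTE s0).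
apply: cvg_trans c; apply: near_eq_cvg; near=> t.
have t0 : t != 0 by near: t; exact: nz.
by rewrite /ht (negbTE t0).
Unshelve. all: by end_near.
Qed.

Lemma psi_ge0 v s : 0 < s -> 0 <= psi v s.
Proof.
move=> s0; have [->|v0] := eqVneq v 0; first by rewrite /psi dotp0r.
have ne : xs + s *: v != xs.
  apply/negP => /eqP/(congr1 (fun z => z - xs)); rewrite addrAC subrr add0r => /eqP.
  by rewrite scaler_eq0 (gt_eqF s0) (negbTE v0).
have := @pc _ _ ne (mn (xs + s *: v)).
have -> : xs - (xs + s *: v) = (- s) *: v by rewrite opprD addrA subrr add0r scaleNr.
rewrite dotpZr -/(psi v s) => h.
apply: ltW; rewrite -(pmulr_rgt0 _ s0) -oppr_lt0 -mulNr //.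
Qed.

Lemma ht_ge0 v s : 0 <= s -> 0 <= ht v s.
Proof.
rewrite le_eqVlt => /orP[/eqP <-|s0]; last first.
  by rewrite /ht (gt_eqF s0) divr_ge0 // ?psi_ge0 // ltW.
rewrite /ht eqxx.
apply: (cvgr_to_ge (cvg_dnbhs_at_right (psi_lim v))).
near=> t; have t0 : 0 < t by near: t; exact: nbhs_right_gt.
by rewrite divr_ge0 // ?psi_ge0 // ltW.
Unshelve. all: by end_near.
Qed.


Notation mu := (@lebesgue_measure R).

Lemma k_meas v : measurable_fun setT (fun t => psi v t / t).
Proof.
have -> : (fun t => psi v t / t) = (fun t => if t == 0 then 0 else ht v t).
  apply/funext => t; case: eqP => [->|/eqP t0]; first by rewrite invr0 mulr0.
  by rewrite /ht (negbTE t0).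
apply: measurable_fun_ifT.
- by apply: measurable_fun_eqr => //; exact: measurable_cst.
- exact: measurable_cst.
- exact: continuous_measurable_fun (ht_cont v).
Qed.

Lemma ht_int v (a b : R) : mu.-integrable `[a, b] (EFin \o ht v).
Proof.
apply: continuous_compact_integrable; first exact: segment_compact.
exact: continuous_subspaceT (ht_cont v).
Qed.

Lemma k_int v : mu.-integrable `[0, 1] (EFin \o (fun t => psi v t / t)).
Proof.
apply: le_integrable; last exact: (ht_int v 0 1).
- by [].
- apply/measurable_EFinP; apply: measurable_funS (k_meas v) => //.
- move=> t _; rewrite /= lee_fin /ht.
  case: eqP => [->|_ //]; by rewrite invr0 mulr0 normr0.
Qed.

Lemma k_eq v : \int[mu]_(t in `[0, 1]) (psi v t / t) = \int[mu]_(t in `[0, 1]) ht v t.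
Proof.
rewrite -Rintegral_itv_obnd_cbnd; last first.
  apply: integrableS (k_int v) => //; exact: subset_itv_oc_cc.
rewrite [RHS]/= -Rintegral_itv_obnd_cbnd; last first.
  apply: integrableS (ht_int v 0 1) => //; exact: subset_itv_oc_cc.
apply: eq_Rintegral => t; rewrite inE /= in_itv /= => /andP[t0 _].
by rewrite /ht (gt_eqF t0).
Qed.


Lemma subst v (l : R) : 0 < l ->
  \int[mu]_(t in `[0, 1]) (ht v (l * t) * l) = \int[mu]_(t in `[0, l]) ht v t.
Proof.
move=> l0.
pose F := fun t : R => l * t.
have dF : forall x, derivable F x 1.
  move=> x; rewrite /F; apply: derivableZ => //. 
have F' : derive1 F = cst l.
  apply/funext => x; rewrite derive1E /F deriveZ //= derive_id. by rewrite /GRing.scale /= mulr1.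
have cF : continuous F.
  move=> y; apply: cvgMl_tmp; exact: cvg_id.
have := @integration_by_substitution_increasing R F (ht v) 0 1 ler01.
rewrite /F mulr0 mulr1 F'.
move=> h; rewrite /Rintegral h.
- congr fine; apply: eq_integral => x _; by [].
- move=> x y _ _ xy; by rewrite ltr_pM2l.
- move=> x _; exact: cst_continuous.
- exact: is_cvg_cst.
- exact: is_cvg_cst.
- split.
  + move=> x _; exact: dF.
  + exact: cvg_at_right_filter (cF 0).
  + exact: cvg_at_left_filter (cF 1).
- exact: continuous_subspaceT (ht_cont v).
Qed.

End Main.

Section Main2.
Variables (R : realType) (d : nat) (f : 'rV[R]_d -> R) (xs : 'rV[R]_d).
Notation mu := (@lebesgue_measure R).

Lemma sub_le (fd : forall x, differentiable f x) (gd : forall x, differentiable (grad f) x)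
  (pc : strictly_pseudoconvex f) (mn : is_global_minimizer f xs) v (l : R) :
  0 <= l <= 1 ->
  \int[mu]_(t in `[0, l]) @ht R d f xs v t <= \int[mu]_(t in `[0, 1]) @ht R d f xs v t.
Proof.
move=> /andP[l0 l1].
rewrite /Rintegral; apply: fine_le.
- exact: (integrable_fin_num _ (ht_int _ _ _ _ fd gd mn v 0 l)).
- exact: (integrable_fin_num _ (ht_int _ _ _ _ fd gd mn v 0 1)).
apply: ge0_subset_integral => //.
- exact: measurable_int (ht_int _ _ _ _ fd gd mn v 0 1).
- move=> t; rewrite /= in_itv /= => /andP[t0 _]; rewrite lee_fin.
  exact: (ht_ge0 _ _ _ _ fd gd pc mn).
- move=> t; rewrite /= !in_itv /= => /andP[-> tl]; exact: le_trans l1.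
Qed.

End Main2.

Theorem theorem4 (R : realType) (d : nat) (f : 'rV[R]_d -> R) (xs : 'rV[R]_d) :
  twice_differentiable f ->
  strictly_pseudoconvex f ->
  is_global_minimizer f xs ->
  (forall x : 'rV[R]_d,
     lebesgue_measure.-integrable `[0%R, 1%R] (EFin \o g_integrand f xs x)) /\
  (forall (x : 'rV[R]_d) (lambda : R), 0 <= lambda <= 1 ->
     gfun f xs (xs + lambda *: (x - xs))
       <= (1 - lambda) * gfun f xs xs + lambda * gfun f xs x).
Proof.
move=> [fd gd] pc mn; split.
  move=> x; exact: (k_int _ _ _ _ fd gd mn (x - xs)).
move=> x l /andP[l0 l1].
set v := x - xs.
have e1 : gfun f xs xs = f xs.
  rewrite /gfun /g_integrand subrr.
  under eq_Rintegral do rewrite dotp0r mul0r.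
  by rewrite Rintegral_cst // mul0r addr0.
have [->|lp] := eqVneq l 0.
  by rewrite scale0r addr0 e1 subr0 mul1r mul0r addr0.
have lpos : 0 < l by rewrite lt_neqAle eq_sym lp l0.
have I2 : \int[lebesgue_measure]_(t in `[0, 1]) g_integrand f xs x t
   = \int[lebesgue_measure]_(t in `[0, 1]) ht R d f xs v t.
  exact: (k_eq _ _ _ _ fd gd mn v).
have c1 : continuous (fun t => ht R d f xs v (l * t) * l).
  move=> t; apply: (@continuousM _ _ (fun t => ht R d f xs v (l * t)) (fun=> l)); last exact: cst_continuous.
  apply: (continuous_comp _ (ht_cont _ _ _ _ fd gd mn v _)).
  apply: cvgMl_tmp; exact: cvg_id.
have c2 : continuous (fun t => l * (ht R d f xs v (l * t) * l)).
  move=> t; apply: cvgMl_tmp; exact: c1.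
have i1 : lebesgue_measure.-integrable `[0, 1] (EFin \o (fun t => ht R d f xs v (l * t) * l)).
  apply: continuous_compact_integrable; [exact: segment_compact|exact: continuous_subspaceT c1].
have i2 : lebesgue_measure.-integrable `[0, 1] (EFin \o (fun t => l * (ht R d f xs v (l * t) * l))).
  apply: continuous_compact_integrable; [exact: segment_compact|exact: continuous_subspaceT c2].
have I1 : \int[lebesgue_measure]_(t in `[0, 1]) g_integrand f xs (xs + l *: v) t
   = l * \int[lebesgue_measure]_(t in `[0, l]) ht R d f xs v t.
  have ev : xs + l *: v - xs = l *: v by rewrite addrAC subrr add0r.
  rewrite /g_integrand ev.
  rewrite -Rintegral_itv_obnd_cbnd; last first.
    apply: integrableS (k_int _ _ _ _ fd gd mn (l *: v)) => //; exact: subset_itv_oc_cc.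
  transitivity (\int[lebesgue_measure]_(t in `]0, 1]) (l * (ht R d f xs v (l * t) * l))).
    apply: eq_Rintegral => t; rewrite inE /= in_itv /= => /andP[t0 _].
    have tn := gt_eqF t0; have ln := gt_eqF lpos.
    rewrite /ht mulf_eq0 ln tn /= /psi scalerA dotpZr (mulrC t l).
    by field; rewrite ln tn.
  rewrite Rintegral_itv_obnd_cbnd; last first.
    apply: integrableS i2 => //; exact: subset_itv_oc_cc.
  rewrite RintegralZl //; congr (_ * _). exact: (subst _ _ _ _ fd gd mn v l lpos).
rewrite e1 /gfun I1 I2.
have lr : 0 <= l <= 1 by rewrite l0 l1.
have h := @sub_le R d f xs fd gd pc mn v l lr.
have h2 := ler_wpM2l l0 h.
lra.
Qed.
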